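(* Let $\mathbf c=(c_0,\dots,c_m)$ and $\mathbf d=(d_0,\dots,d_n)$ be degree sequences, and let $A=\Delta(\mathbf c)$, $B=\Delta(\mathbf d)$. Then \[\pi(\mathbf c)\cdot\pi(\mathbf d)=\sum_{\sigma\in\mathrm{Sh}(A,B)}\pi\big(\Sigma(\sigma,c_0+d_0)\big).\] More generally, for degree sequences $\mathbf d^1,\dots,\mathbf d^r$ with $\mathbf d^i=(d^i_0,\dots)$ and $A_i=\Delta(\mathbf d^i)$, \[\prod_{i=1}^r\pi(\mathbf d^i)=\sum_{\sigma\in\mathrm{Sh}(A_1,\dots,A_r)}\pi\big(\Sigma(\sigma,d^1_0+\cdots+d^r_0)\big).\]
   Context: A diagram is a finitely supported function $\mathbb Z_{\ge0}\times\mathbb Z\to\mathbb Q$, $(i,j)\mapsto\beta_{i,j}$. The (tensor) product of diagrams is $(\beta\cdot\beta')_{i,j}=\sum_{i_1+i_2=i,\ j_1+j_2=j}\beta_{i_1,j_1}\beta'_{i_2,j_2}$. A degree sequence is $\mathbf d=(d_0,\dots,d_c)\in\mathbb Z^{c+1}$ with $d_0<\cdots<d_c$. The pure diagram $\pi(\mathbf d)$ has entries $\pi(\mathbf d)_{i,j}=\prod_{k\ne i}\frac1{|d_i-d_k|}$ if $0\le i\le c$ and $j=d_i$, and $0$ otherwise. The first difference is $\Delta(\mathbf d)=(d_1-d_0,d_2-d_1,\dots,d_c-d_{c-1})$. For a sequence $s=(s_1,\dots,s_p)$ and an integer $e$, $\Sigma(s,e)=(e,e+s_1,e+s_1+s_2,\dots,e+s_1+\cdots+s_p)$.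 For finite sequences $A_1,\dots,A_r$, $\mathrm{Sh}(A_1,\dots,A_r)$ is the set of shuffles: sequences obtained by interleaving the entries of $A_1,\dots,A_r$ so that the relative order of the entries of each $A_i$ is preserved (shuffles are distinguished by which positions are occupied by entries of which $A_i$, so they are counted with multiplicity even if entries coincide). *)

(* Defs.v *)
From mathcomp Require Import all_boot all_order all_algebra.
Set Implicit Arguments. Unset Strict Implicit. Unset Printing Implicit Defensive.
Import Order.TTheory GRing.Theory Num.Theory.
Local Open Scope ring_scope.

(* A diagram (finitely supported function Z_{>=0} x Z -> Q) is represented as a
   formal finite sum of weighted points ((i,j), w); its value at (i,j) is the
   sum of the weights sitting at (i,j). *)
Definition diagram := seq ((nat * int) * rat).

Definition dval (D : diagram) (i : nat) (j : int) : rat :=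
  \sum_(e <- D | e.1 == (i, j)) e.2.

Definition diag_eq (D E : diagram) : Prop :=
  forall (i : nat) (j : int), dval D i j = dval E i j.

Definition dsum (Ds : seq diagram) : diagram := flatten Ds.

Definition dmul (D E : diagram) : diagram :=
  [seq ((x.1.1 + y.1.1, x.1.2 + y.1.2)%R, x.2 * y.2) | x <- D, y <- E].

Definition dunit : diagram := [:: ((0%N, 0%:Z), 1)].

Definition dprod (Ds : seq diagram) : diagram := foldr dmul dunit Ds.

Definition degree_seq (d : seq int) : bool := (0 < size d)%N && sorted <%R d.

Definition pure (d : seq int) : diagram :=
  [seq ((i, d`_i),
        \prod_(k < size d | k != i :> nat) `|((d`_i - d`_k)%:~R : rat)|^-1)
  | i <- iota 0 (size d)].

Definition Delta (d : seq int) : seq int :=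
  pairmap (fun a b => b - a) (head 0 d) (behead d).

Fixpoint Sigma (s : seq int) (e : int) : seq int :=
  match s with
  | [::] => [:: e]
  | x :: s' => e :: Sigma s' (e + x)
  end.

(* Shuffles: a shuffle of A_0,...,A_{r-1} is determined by a word w over
   {0,...,r-1} in which letter i occurs size A_i times (w records which
   sequence occupies each position); the shuffle is then filled in order. *)
Fixpoint fill_word (w : seq nat) (As : seq (seq int)) : seq int :=
  match w with
  | [::] => [::]
  | i :: w' =>
      head 0 (nth [::] As i)
        :: fill_word w' (set_nth [::] As i (behead (nth [::] As i)))
  end.

Definition label_words (As : seq (seq int)) : seq (seq nat) :=
  permutations (flatten [seq nseq (size (nth [::] As i)) i | i <- iota 0 (size As)]).

(* Sh(A_1,...,A_r), as a list with multiplicity (one entry per label word). *)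
Definition shuffles (As : seq (seq int)) : seq (seq int) :=
  [seq fill_word w As | w <- label_words As].

(* Main.v *)
Require Import Defs.
From mathcomp Require Import all_boot all_order all_algebra zify ring lra.
Import Order.TTheory GRing.Theory Num.Theory.
Local Open Scope ring_scope.
Set Implicit Arguments. Unset Strict Implicit. Unset Printing Implicit Defensive.

Definition st (r : nat) (s u : seq nat) : seq nat :=
  [seq (nth 0%N s k + count_mem k u)%N | k <- iota 0 r].
Definition Vf (r : nat) (f : nat -> nat -> int) (s : seq nat) : int :=
  \sum_(k < r) f k (nth 0%N s k).
Definition rest (r : nat) (n : nat -> nat) (s : seq nat) : seq nat :=
  flatten [seq nseq (n k - nth 0%N s k)%N k | k <- iota 0 r].
Definition wt r f (a x : seq nat) : rat := `|((Vf r f a - Vf r f x)%:~R : rat)|^-1.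
Definition hw r f (s w a : seq nat) : rat :=
  \sum_(p < (size w).+1) ((st r s (take p w) == a)%:R *
     \prod_(q < (size w).+1 | q != p) wt r f a (st r s (take q w))).
Definition S r n f (s a : seq nat) : rat :=
  \sum_(w <- permutations (rest r n s)) hw r f s w a.

Lemma size_st r s u : size (st r s u) = r.
Proof. by rewrite size_map size_iota. Qed.

Lemma nth_st r s u k : (k < r)%N -> nth 0%N (st r s u) k = (nth 0%N s k + count_mem k u)%N.
Proof. by move=> kr; rewrite (nth_map 0%N) ?size_iota // nth_iota. Qed.

Lemma st_cons r s x u : st r s (x :: u) = st r (st r s [:: x]) u.
Proof.
apply/eq_in_map => k; rewrite mem_iota add0n => kr.
rewrite nth_st //=; lia.
Qed.

Lemma st_nil r s : size s = r -> st r s [::] = s.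
Proof.
move=> sz; apply: (@eq_from_nth _ 0%N); first by rewrite size_st.
by move=> i; rewrite size_st => ir; rewrite nth_st // addn0.
Qed.

Lemma hw_nil r f s a : size s = r -> hw r f s [::] a = (s == a)%:R.
Proof.
move=> sz; rewrite /hw big_ord1 big_pred0 ?mulr1 //= ?st_nil //.
by move=> q; rewrite ord1.
Qed.

Lemma hw_cons_ne r f s x w a : size s = r -> s != a ->
  hw r f s (x :: w) a = wt r f a s * hw r f (st r s [:: x]) w a.
Proof.
move=> sz sa; rewrite /hw /= big_ord_recl /= st_nil // (negbTE sa) mul0r add0r.
rewrite mulr_sumr; apply: eq_bigr => p _.
rewrite add0n -st_cons mulrCA; congr (_ * _).
rewrite big_mkcond big_ord_recl /= st_nil //; congr (_ * _).
rewrite [RHS]big_mkcond; apply: eq_bigr => q _.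
by rewrite (inj_eq (@lift_inj _ ord0)) add0n -st_cons.
Qed.

Lemma rest_S r n s : rest r.+1 n s = rest r n s ++ nseq (n r - nth 0%N s r)%N r.
Proof. by rewrite /rest -addn1 iotaD map_cat flatten_cat /= cats0. Qed.

Lemma count_rest r n s x :
  count_mem x (rest r n s) = if (x < r)%N then (n x - nth 0%N s x)%N else 0%N.
Proof.
elim: r => [|r IH] //; rewrite rest_S count_cat IH count_nseq /=.
case: (ltngtP x r) => [xr|rx|->].
- by rewrite /= (_ : (x < r.+1)%N = true) ?mul0n ?addn0 //; lia.
- by rewrite /= (_ : (x < r.+1)%N = false) //; lia.
- by rewrite /= ltnSn mul1n.
Qed.

Lemma mem_rest r n s x : (x \in rest r n s) = (x < r)%N && (nth 0%N s x < n x)%N.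
Proof.
rewrite -has_pred1 has_count count_rest.
by case: ifP => //= _; rewrite subn_gt0.
Qed.

Lemma perm_rest r n s x : (x < r)%N -> (nth 0%N s x < n x)%N ->
  perm_eq (rem x (rest r n s)) (rest r n (st r s [:: x])).
Proof.
move=> xr xn; have xin : x \in rest r n s by rewrite mem_rest xr.
apply/allP => y _ /=; apply/eqP.
rewrite count_rem xin /= !count_rest.
case: ifP => // yr; rewrite nth_st //=.
by case: eqP => [<-|]; lia.
Qed.

Lemma sum_undup_rest r n s (G : nat -> rat) :
  \sum_(x <- undup (rest r n s)) G x = \sum_(k < r | (nth 0%N s k < n k)%N) G k.
Proof.
have pe : perm_eq (undup (rest r n s)) [seq k <- iota 0 r | (nth 0%N s k < n k)%N].
  apply: uniq_perm; first exact: undup_uniq.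
    by apply: filter_uniq; apply: iota_uniq.
  by move=> y; rewrite mem_undup mem_rest mem_filter mem_iota add0n andbC.
by rewrite (perm_big _ pe) big_filter -(big_mkord (fun k => (nth 0%N s k < n k)%N)) /index_iota subn0.
Qed.

Lemma S_rec r n f s a : size s = r -> s != a -> (0 < size (rest r n s))%N ->
  S r n f s a = wt r f a s * \sum_(k < r | (nth 0%N s k < n k)%N) S r n f (st r s [:: (k : nat)]) a.
Proof.
move=> sz sa ne; rewrite /S (perm_big _ (permutationsE ne)) big_allpairs_dep /=.
rewrite -(sum_undup_rest _ _ _ (fun k => S r n f (st r s [:: k]) a)) mulr_sumr; apply: eq_big_seq => x.
rewrite mem_undup mem_rest => /andP[xr xn].
rewrite mulr_sumr (perm_big _ (perm_permutations (perm_rest xr xn))).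
by apply: eq_bigr => w _; rewrite hw_cons_ne.
Qed.

Lemma S_out r n f s a k : (k < r)%N -> (nth 0%N a k < nth 0%N s k)%N -> S r n f s a = 0.
Proof.
move=> kr ak; rewrite /S big1 // => w _; rewrite /hw big1 // => p _.
case: eqP => [E|]; last by rewrite mul0r.
by move: ak; rewrite -E nth_st //; lia.
Qed.

Definition incr r n (f : nat -> nat -> int) :=
  forall k l l', (k < r)%N -> (l < l')%N -> (l' <= n k)%N -> f k l < f k l'.
Definition Pr r (f : nat -> nat -> int) (s a : seq nat) : rat :=
  \prod_(k < r) \prod_(nth 0%N s k <= l < nth 0%N a k)
     `|((f k (nth 0%N a k) - f k l)%:~R : rat)|^-1.

Lemma Pr_step r f s a k : (k < r)%N -> (nth 0%N s k < nth 0%N a k)%N ->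
  f k (nth 0%N a k) != f k (nth 0%N s k) ->
  Pr r f (st r s [:: k]) a = Pr r f s a * `|((f k (nth 0%N a k) - f k (nth 0%N s k))%:~R : rat)|.
Proof.
move=> kr ska hx; rewrite /Pr (bigD1 (Ordinal kr)) //= [in RHS](bigD1 (Ordinal kr)) //=.
rewrite nth_st //= eqxx addn1 [in RHS]big_ltn //.
have -> : \prod_(i < r | i != Ordinal kr)
    \prod_(nth 0%N (st r s [:: k]) i <= l < nth 0%N a i)
       `|((f i (nth 0%N a i) - f i l)%:~R : rat)|^-1 =
   \prod_(i < r | i != Ordinal kr)
    \prod_(nth 0%N s i <= l < nth 0%N a i)
       `|((f i (nth 0%N a i) - f i l)%:~R : rat)|^-1.
  apply: eq_bigr => i ik; rewrite nth_st //= addn0.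
  by rewrite (_ : (k == i) = false) ?addn0 //; apply/eqP => E; move: ik; rewrite -val_eqE /= E eqxx.
rewrite [RHS]mulrC !mulrA mulfV ?mul1r // normr_eq0 intr_eq0 subr_eq0 //.
Qed.

Lemma sum_dec r (a s : seq nat) k : (k < r)%N -> (nth 0%N s k < nth 0%N a k)%N ->
  (\sum_(j < r) (nth 0%N a j - nth 0%N (st r s [:: k]) j))%N =
  ((\sum_(j < r) (nth 0%N a j - nth 0%N s j)) - 1)%N.
Proof.
move=> kr ska; rewrite (bigD1 (Ordinal kr)) //= [in RHS](bigD1 (Ordinal kr)) //=.
rewrite nth_st //= eqxx.
have -> : (\sum_(i < r | i != Ordinal kr) (nth 0%N a i - nth 0%N (st r s [:: k]) i))%N =
   (\sum_(i < r | i != Ordinal kr) (nth 0%N a i - nth 0%N s i))%N.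
  apply: eq_bigr => i ik; rewrite nth_st //= addn0.
  by rewrite (_ : (k == i) = false) ?addn0 //; apply/eqP => E; move: ik; rewrite -val_eqE /= E eqxx.
rewrite addn0 (_ : nat_of_bool true = 1%N) //. set X := (\sum_(i < r | _) _)%N. clearbody X. lia.
Qed.

Lemma incr_le r n f k l l' : incr r n f -> (k < r)%N -> (l <= l')%N -> (l' <= n k)%N ->
  f k l <= f k l'.
Proof.
move=> inc kr; rewrite leq_eqVlt => /orP[/eqP->|ll'] l'n //.
by apply: ltW; apply: inc.
Qed.

Lemma S_pre r n f a : incr r n f -> size a = r ->
  (forall k, (k < r)%N -> (nth 0%N a k <= n k)%N) ->
  forall s, size s = r -> (forall k, (k < r)%N -> (nth 0%N s k <= nth 0%N a k)%N) ->
  S r n f s a = Pr r f s a * S r n f a a.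
Proof.
move=> inc sza an.
suff H : forall m s, (\sum_(k < r) (nth 0%N a k - nth 0%N s k))%N = m -> size s = r ->
   (forall k, (k < r)%N -> (nth 0%N s k <= nth 0%N a k)%N) ->
   S r n f s a = Pr r f s a * S r n f a a by move=> s; exact: H.
elim=> [|m IH] s Hm sz sa.
  have -> : s = a.
    apply: (@eq_from_nth _ 0%N); first by rewrite sz sza.
    move=> k; rewrite sz => kr.
    have /eqP := Hm; rewrite sum_nat_eq0 => /forallP /(_ (Ordinal kr)) /eqP /= h.
    by have := sa k kr; lia.
  by rewrite /Pr big1 ?mul1r // => k _; rewrite big_geq.
have : (\sum_(k < r) (nth 0%N a k - nth 0%N s k) != 0)%N by rewrite Hm.
rewrite sum_nat_eq0 negb_forall => /existsP[k0 /eqP hk0].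
have sk0 : (nth 0%N s k0 < nth 0%N a k0)%N by lia.
have sna : s != a by apply/eqP => E; move: sk0; rewrite E ltnn.
have ne : (0 < size (rest r n s))%N.
  have : (k0 : nat) \in rest r n s.
    by rewrite mem_rest ltn_ord /=; have := an k0 (ltn_ord k0); lia.
  by case: (rest r n s).
rewrite S_rec //.
pose d k := ((f k (nth 0%N a k) - f k (nth 0%N s k))%:~R : rat).
have dge0 : forall k : 'I_r, 0 <= d k.
  move=> k; rewrite /d ler0z subr_ge0; apply: (incr_le inc) => //; first exact: sa.
  exact: an.
have dgt0 : forall k : 'I_r, (nth 0%N s k < nth 0%N a k)%N -> 0 < d k.
  move=> k h; rewrite /d ltr0z subr_gt0; apply: inc => //; exact: an.
have -> : \sum_(k < r | (nth 0%N s k < n k)%N) S r n f (st r s [:: (k : nat)]) a =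
          \sum_(k < r) Pr r f s a * S r n f a a * d k.
  rewrite [RHS](bigID (fun k : 'I_r => (nth 0%N s k < n k)%N)) /=.
  rewrite [X in _ = _ + X]big1 ?addr0; last first.
    move=> k h; have : nth 0%N s k = nth 0%N a k.
      by have := sa k (ltn_ord k); have := an k (ltn_ord k); lia.
    by move=> E; rewrite /d E subrr mulr0.
  apply: eq_bigr => k skn; case: (ltnP (nth 0%N s k) (nth 0%N a k)) => h.
    rewrite IH ?size_st //; last first.
      move=> j jr; rewrite nth_st //=; have := sa j jr.
      by case: eqP => [<-|]; lia.
      by rewrite sum_dec // Hm subn1.
    rewrite Pr_step //; last by rewrite -subr_eq0 -(intr_eq0 rat) gt_eqF // (dgt0 k h).
    rewrite -/(d k) ger0_norm //; ring.
  rewrite (@S_out r n f _ a k) //; last by rewrite nth_st //= eqxx; lia.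
  have E : nth 0%N s k = nth 0%N a k by have := sa k (ltn_ord k); lia.
  by rewrite /d E subrr mulr0.
rewrite -mulr_sumr.
have Dpos : 0 < \sum_(k < r) d k.
  rewrite (bigD1 k0) //=; apply: ltr_pwDl; first exact: dgt0.
  exact: sumr_ge0.
have -> : wt r f a s = (\sum_(k < r) d k)^-1.
  by rewrite /wt /Vf -sumrB mulrz_sumr gtr0_norm.
by rewrite [LHS]mulrC mulfK // gt_eqF.
Qed.

Lemma hw_single r f s w a p0 : (p0 <= size w)%N ->
  (forall p, (p <= size w)%N -> (st r s (take p w) == a) = (p == p0)) ->
  hw r f s w a = \prod_(q < (size w).+1 | q != p0 :> nat) wt r f a (st r s (take q w)).
Proof.
move=> hp0 H; rewrite /hw (bigD1 (Ordinal (hp0 : (p0 < (size w).+1)%N))) //=.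
rewrite H // eqxx mul1r [X in _ + X]big1 ?addr0.
  apply: eq_bigl => q.  by rewrite -(inj_eq val_inj).
move=> p pp0; rewrite (H p (ltn_ord p)).
by move: pp0; rewrite -(inj_eq val_inj) /= => /negbTE ->; rewrite mul0r.
Qed.


Lemma st_eq_self r (s u : seq nat) : size s = r -> all (fun x => x < r)%N u ->
  (st r s u == s) = (u == [::]).
Proof.
move=> sz; case: u => [|x u]; first by rewrite st_nil // !eqxx.
case/andP => xr _; rewrite (_ : (x :: u == [::]) = false) //.
apply/negbTE/eqP => E.
have := congr1 (fun t => nth 0%N t x) E; rewrite nth_st // => h.
have : (0 < count_mem x (x :: u))%N by rewrite /= eqxx.
lia.
Qed.

Lemma sum_count r (u : seq nat) : all (fun x => x < r)%N u ->
  (\sum_(k < r) count_mem (k : nat) u)%N = size u.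
Proof.
elim: u => [|x u IH] /=; first by rewrite big1.
move=> /andP[xr ur]; rewrite big_split /= IH // (bigD1 (Ordinal xr)) //= eqxx big1 //.
move=> k kx; case: eqP => // E; move: kx; rewrite -val_eqE /= E eqxx //.
Qed.

Lemma perm_eq_st r (u v : seq nat) : (forall k, count_mem k u = count_mem k v) -> 
  forall s, st r s u = st r s v.
Proof. by move=> H s; apply: eq_map => k; rewrite H. Qed.

Definition nd (n : nat -> nat) (a : seq nat) k := (n k - nth 0%N a k)%N.
Definition fd (n : nat -> nat) (f : nat -> nat -> int) k l : int := - f k (n k - l)%N.
Definition ed r n a := [seq nd n a k | k <- iota 0 r].
Definition zr r := nseq r 0%N.

Lemma incr_dual r n f a : incr r n f -> incr r (nd n a) (fd n f).
Proof.
move=> inc k l l' kr ll' l'n; rewrite /fd ltrN2; apply: inc => //; rewrite /nd in l'n; lia.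
Qed.

Lemma nth_ed r n a k : (k < r)%N -> nth 0%N (ed r n a) k = nd n a k.
Proof. by move=> kr; rewrite (nth_map 0%N) ?size_iota // nth_iota. Qed.

Lemma nth_zr r k : nth 0%N (zr r) k = 0%N.
Proof. by rewrite nth_nseq if_same. Qed.

Lemma size_ed r n a : size (ed r n a) = r.
Proof. by rewrite size_map size_iota. Qed.

Lemma size_zr r : size (zr r) = r.
Proof. by rewrite size_nseq. Qed.

Lemma rest_dual r n a : rest r n a = rest r (nd n a) (zr r).
Proof. by rewrite /rest; congr flatten; apply: eq_map => k; rewrite nth_zr subn0. Qed.

Lemma S_ed r n f a : S r (nd n a) (fd n f) (ed r n a) (ed r n a) = 1.
Proof.
rewrite /S; have -> : rest r (nd n a) (ed r n a) = [::].
  rewrite /rest (_ : [seq nseq (nd n a k - nth 0%N (ed r n a) k) k | k <- iota 0 r] =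
      [seq [::] | k <- iota 0 r]); first by elim: (iota 0 r).
  by apply/eq_in_map => k; rewrite mem_iota add0n => kr; rewrite nth_ed // subnn.
by rewrite /= big_seq1 hw_nil ?size_ed // eqxx.
Qed.

Lemma prod_shift (L : nat) (F : nat -> rat) :
  \prod_(q < L.+1 | q != 0%N :> nat) F q = \prod_(q < L) F q.+1.
Proof.
by rewrite big_mkcond big_ord_recl /= mul1r; apply: eq_bigr => q _.
Qed.

Lemma prod_last (L : nat) (F : nat -> rat) :
  \prod_(q < L.+1 | q != L :> nat) F q = \prod_(q < L) F q.
Proof.
rewrite big_mkcond big_ord_recr /= eqxx mulr1; apply: eq_bigr => q _.
by rewrite (ltn_eqF (ltn_ord q)).
Qed.

Lemma st_size r (u v : seq nat) : all (fun x => x < r)%N u -> all (fun x => x < r)%N v ->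
  st r (zr r) u = st r (zr r) v -> size u = size v.
Proof.
move=> hu hv E; rewrite -(sum_count hu) -(sum_count hv).
apply: eq_bigr => k _.
have := congr1 (fun t => nth 0%N t k) E; rewrite !nth_st // !nth_zr.
by rewrite !add0n.
Qed.

Lemma all_take_lt r p (w : seq nat) : all (fun x => x < r)%N w -> all (fun x => x < r)%N (take p w).
Proof. by move=> /allP h; apply/allP => x /mem_take /h. Qed.

Lemma hw_dual r n f a w : size a = r -> (forall k, (k < r)%N -> (nth 0%N a k <= n k)%N) ->
  w \in permutations (rest r n a) ->
  hw r f a w a = hw r (fd n f) (zr r) (rev w) (ed r n a).
Proof.
move=> sza an; rewrite mem_permutations => pw.
have cw : forall k, count_mem k w = if (k < r)%N then (n k - nth 0%N a k)%N else 0%N.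
  by move=> k; rewrite (permP pw) count_rest.
have aw : all (fun x => x < r)%N w.
  apply/allP => x xw; have : x \in rest r n a by rewrite -(perm_mem pw).
  by rewrite mem_rest => /andP[].
have arw : all (fun x => x < r)%N (rev w) by rewrite all_rev.
rewrite (@hw_single _ _ _ w a 0%N) //; last first.
  move=> p pL; rewrite st_eq_self ?all_take_lt //.
  by rewrite -size_eq0 size_takel.
rewrite (@hw_single _ _ _ (rev w) (ed r n a) (size w)) ?size_rev //; last first.
  move=> p pL.
  have E : ed r n a = st r (zr r) (rev w).
    apply: (@eq_from_nth _ 0%N); rewrite ?size_ed ?size_st // => k kr.
    by rewrite nth_ed // nth_st // nth_zr add0n count_rev cw kr.
  rewrite E; apply/eqP/eqP => [h|->]; last by rewrite take_oversize ?size_rev.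
  have := st_size (all_take_lt p arw) arw h.
  by rewrite size_takel ?size_rev.
rewrite (prod_shift (size w) (fun q => wt r f a (st r a (take q w)))).
rewrite (prod_last (size w) (fun q => wt r (fd n f) (ed r n a) (st r (zr r) (take q (rev w))))).
rewrite [RHS](reindex_inj rev_ord_inj); apply: eq_bigr => q _ /=.
have jL : (q.+1 <= size w)%N by apply: ltn_ord.
rewrite take_rev (_ : (size w - (size w - q.+1))%N = q.+1); last by lia.
move: jL; set j := q.+1 => jL.
rewrite /wt.
rewrite (_ : Vf r (fd n f) (ed r n a) - Vf r (fd n f) (st r (zr r) (rev (drop j w))) =
           - (Vf r f a - Vf r f (st r a (take j w)))); first by rewrite mulrNz normrN.
rewrite /Vf -!sumrB -sumrN; apply: eq_bigr => k _.
rewrite nth_ed // !nth_st // nth_zr add0n count_rev.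
have hc := cw k; rewrite ltn_ord -(cat_take_drop j w) count_cat in hc.
rewrite /fd /nd.
rewrite (_ : (n k - (n k - nth 0%N a k))%N = nth 0%N a k); last by have := an k (ltn_ord k); lia.
rewrite (_ : (n k - count_mem (k : nat) (drop j w))%N = (nth 0%N a k + count_mem (k : nat) (take j w))%N);
  last by have := an k (ltn_ord k); lia.
ring.
Qed.

Lemma S_self r n f a : incr r n f -> size a = r ->
  (forall k, (k < r)%N -> (nth 0%N a k <= n k)%N) ->
  S r n f a a = \prod_(k < r) \prod_((nth 0%N a k).+1 <= l < (n k).+1)
                  `|((f k l - f k (nth 0%N a k))%:~R : rat)|^-1.
Proof.
move=> inc sza an.
have -> : S r n f a a = S r (nd n a) (fd n f) (zr r) (ed r n a).
  rewrite /S -rest_dual.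
  set P := permutations (rest r n a).
  have pe : perm_eq P (map rev P).
    apply: uniq_perm; first exact: permutations_uniq.
      by rewrite (map_inj_uniq (inv_inj (@revK _))) permutations_uniq.
    move=> w; rewrite -{2}(revK w) (mem_map (inv_inj (@revK _))) !mem_permutations.
    by rewrite perm_rev.
  rewrite [RHS](perm_big _ pe) big_map; apply: eq_big_seq => w wP.
  exact: hw_dual.
rewrite (S_pre (@incr_dual r n f a inc)) ?size_ed ?size_zr //; first last.
- by move=> k kr; rewrite nth_zr.
- by move=> k kr; rewrite nth_ed.
rewrite S_ed mulr1 /Pr; apply: eq_bigr => k _.
rewrite nth_zr nth_ed // big_nat_rev /= -{1}(add0n (nth 0%N a k).+1) big_addn subSS.
apply: eq_big_nat => l /andP[_ hl].
have akn := an k (ltn_ord k).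
rewrite /fd /nd in hl *.
rewrite (_ : (n k - (n k - nth 0%N a k))%N = nth 0%N a k); last by lia.
rewrite (_ : (n k - (0 + (n k - nth 0%N a k) - l.+1))%N = (l + (nth 0%N a k).+1)%N); last by lia.
congr (`|(_ %:~R)|^-1); ring.
Qed.

Lemma S_main r n f a : incr r n f -> size a = r ->
  (forall k, (k < r)%N -> (nth 0%N a k <= n k)%N) ->
  S r n f (zr r) a = \prod_(k < r) \prod_(l < (n k).+1 | l != nth 0%N a k :> nat)
                        `|((f k (nth 0%N a k) - f k l)%:~R : rat)|^-1.
Proof.
move=> inc sza an.
rewrite (S_pre inc) ?size_zr //; last by move=> k kr; rewrite nth_zr.
rewrite (S_self inc) // /Pr -big_split; apply: eq_bigr => k _ /=.
have akn := an k (ltn_ord k).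
rewrite nth_zr -(big_mkord (fun l => l != nth 0%N a k) (fun l => `|((f k (nth 0%N a k) - f k l)%:~R : rat)|^-1)).
rewrite [RHS]big_mkcond [RHS](@big_cat_nat _ _ _ (nth 0%N a k)) //=.
congr (_ * _).
  by apply: eq_big_nat => l /andP[_ hl]; rewrite (ltn_eqF hl).
rewrite [RHS]big_ltn ?ltnS // eqxx mul1r.
apply: eq_big_nat => l /andP[hl _]; rewrite (gtn_eqF hl).
  by rewrite -opprB mulrNz normrN.
by apply: leqW.
Qed.

Fixpoint stl (Ds : seq (seq int)) : seq (seq nat) :=
  match Ds with
  | [::] => [:: [::]]
  | D :: Ds' => [seq l :: a | l <- iota 0 (size D), a <- stl Ds']
  end.

Definition pw (D : seq int) (l : nat) : rat :=
  \prod_(k < size D | k != l :> nat) `|((D`_l - D`_k)%:~R : rat)|^-1.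

Fixpoint Vd (Ds : seq (seq int)) (a : seq nat) : int :=
  match Ds, a with
  | D :: Ds', l :: a' => D`_l + Vd Ds' a'
  | _, _ => 0
  end.

Fixpoint Pd (Ds : seq (seq int)) (a : seq nat) : rat :=
  match Ds, a with
  | D :: Ds', l :: a' => pw D l * Pd Ds' a'
  | _, _ => 1
  end.

Lemma dprod_eq Ds :
  dprod [seq pure d | d <- Ds] = [seq ((sumn a, Vd Ds a), Pd Ds a) | a <- stl Ds].
Proof.
elim: Ds => [|D Ds IH] //=; rewrite IH /dmul /pure.
elim: (iota 0 (size D)) => //= l s IHs; rewrite map_cat IHs -map_comp.
congr (_ ++ _); rewrite -map_comp; by apply: eq_map => a /=.
Qed.

Lemma dval_map (T : Type) (s : seq T) (g : T -> nat * int) (h : T -> rat) i j :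
  dval [seq (g x, h x) | x <- s] i j = \sum_(x <- s | g x == (i, j)) h x.
Proof. by rewrite /dval big_map. Qed.

Lemma dval_lhs Ds i j :
  dval (dprod [seq pure d | d <- Ds]) i j =
  \sum_(a <- stl Ds | (sumn a, Vd Ds a) == (i, j)) Pd Ds a.
Proof. by rewrite dprod_eq dval_map. Qed.

Lemma Vd_Vf Ds a : size a = size Ds ->
  Vd Ds a = Vf (size Ds) (fun k l => nth 0 (nth [::] Ds k) l) a.
Proof.
elim: Ds a => [|D Ds IH] [|l a] //=; first by rewrite /Vf big_ord0.
move=> [sz]; rewrite IH // /Vf big_ord_recl /=; congr (_ + _).
Qed.

Lemma Pd_prod Ds a : size a = size Ds ->
  Pd Ds a = \prod_(k < size Ds) pw (nth [::] Ds k) (nth 0%N a k).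
Proof.
elim: Ds a => [|D Ds IH] [|l a] //=; first by rewrite big_ord0.
by move=> [sz]; rewrite IH // big_ord_recl.
Qed.

Lemma stl_size Ds a : a \in stl Ds -> size a = size Ds.
Proof.
elim: Ds a => [|D Ds IH] a /=; first by rewrite inE => /eqP->.
by case/allpairsP => -[l b] /= [_ bin ->] /=; rewrite (IH _ bin).
Qed.

Lemma stl_bound Ds a k : a \in stl Ds -> (k < size Ds)%N -> (nth 0%N a k < size (nth [::] Ds k))%N.
Proof.
elim: Ds a k => [|D Ds IH] a k //=.
case/allpairsP => -[l b] /= [lin bin ->]; case: k => [|k] /= kr.
  by move: lin; rewrite mem_iota.
exact: IH.
Qed.

Lemma stl_mem Ds a : size a = size Ds ->
  (forall k, (k < size Ds)%N -> (nth 0%N a k < size (nth [::] Ds k))%N) -> a \in stl Ds.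
Proof.
elim: Ds a => [|D Ds IH] [|l a] //=.
move=> [sz] h; apply/allpairsP; exists (l, a) => /=; split => //.
  by rewrite mem_iota add0n; exact: (h 0%N).
by apply: IH => // k kr; exact: (h k.+1).
Qed.

Lemma stl_uniq Ds : uniq (stl Ds).
Proof.
elim: Ds => [|D Ds IH] //=; apply: allpairs_uniq => //; first exact: iota_uniq.
by move=> [l a] [l' a'] _ _ /= [-> ->].
Qed.

Definition fD (Ds : seq (seq int)) k l : int := nth 0 (nth [::] Ds k) l.
Definition nD (Ds : seq (seq int)) k : nat := (size (nth [::] Ds k)).-1.
Definition AsD (Ds : seq (seq int)) (s : seq nat) :=
  [seq drop (nth 0%N s k) (Delta (nth [::] Ds k)) | k <- iota 0 (size Ds)].

Lemma nth_AsD Ds s k : (k < size Ds)%N ->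
  nth [::] (AsD Ds s) k = drop (nth 0%N s k) (Delta (nth [::] Ds k)).
Proof. by move=> kr; rewrite (nth_map 0%N) ?size_iota // nth_iota. Qed.

Lemma Delta_nth (D : seq int) m : (m.+1 < size D)%N -> nth 0 (Delta D) m = D`_m.+1 - D`_m.
Proof. by case: D => [|d0 D'] //= h; rewrite /Delta /= (nth_pairmap 0). Qed.

Lemma Vf_step Ds s x : (x < size Ds)%N -> ((nth 0%N s x).+1 < size (nth [::] Ds x))%N ->
  Vf (size Ds) (fD Ds) s + head 0 (drop (nth 0%N s x) (Delta (nth [::] Ds x))) =
  Vf (size Ds) (fD Ds) (st (size Ds) s [:: x]).
Proof.
move=> xr h; rewrite -nth0 nth_drop addn0 Delta_nth // /Vf.
rewrite (bigD1 (Ordinal xr)) //= [RHS](bigD1 (Ordinal xr)) //= nth_st //= eqxx addn1.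
have -> : \sum_(i < size Ds | i != Ordinal xr) fD Ds i (nth 0%N (st (size Ds) s [:: x]) i) =
          \sum_(i < size Ds | i != Ordinal xr) fD Ds i (nth 0%N s i).
  apply: eq_bigr => i ik; rewrite nth_st //= addn0.
  by rewrite (_ : (x == i) = false) ?addn0 //; apply/eqP => E; move: ik; rewrite -val_eqE /= E eqxx.
rewrite /fD; ring.
Qed.

Lemma AsD_step Ds s x : (x < size Ds)%N ->
  set_nth [::] (AsD Ds s) x (behead (nth [::] (AsD Ds s) x)) = AsD Ds (st (size Ds) s [:: x]).
Proof.
move=> xr; apply: (@eq_from_nth _ [::]).
  by rewrite size_set_nth !size_map !size_iota; apply/maxn_idPr.
move=> i; rewrite size_set_nth size_map size_iota (maxn_idPr xr) => ir.
rewrite nth_set_nth /= [RHS]nth_AsD // nth_st //=.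
case: eqP => [->|ix]; first by rewrite nth_AsD // eqxx -drop1 drop_drop addn1.
rewrite nth_AsD //; congr (drop _ _).
by rewrite (_ : (x == i) = false) ?addn0 //; apply/eqP => E; apply: ix.
Qed.

Lemma fill_Sigma Ds w : forall s, size s = size Ds -> all (fun x => x < size Ds)%N w ->
  (forall k, (k < size Ds)%N -> (nth 0%N s k + count_mem k w <= nD Ds k)%N) ->
  Sigma (fill_word w (AsD Ds s)) (Vf (size Ds) (fD Ds) s) =
  [seq Vf (size Ds) (fD Ds) (st (size Ds) s (take q w)) | q <- iota 0 (size w).+1].
Proof.
elim: w => [|x w IH] s sz.
  by move=> _ _ /=; rewrite st_nil.
case/andP => xr wr hc; rewrite [LHS]/=.
have hx : ((nth 0%N s x).+1 < size (nth [::] Ds x))%N.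
  by have := hc x xr; rewrite /nD /= eqxx; lia.
rewrite AsD_step // nth_AsD // Vf_step // IH ?size_st //; last first.
  move=> k kr; have := hc k kr; rewrite nth_st //=; lia.
have -> : iota 0 (size (x :: w)).+1 = 0%N :: iota (1 + 0) (size w).+1 by [].
rewrite map_cons take0 st_nil //; congr (_ :: _).
rewrite iotaDl -map_comp; apply: eq_map => q /=.
by rewrite -st_cons.
Qed.

Lemma dval_pure_map (m : nat) (G : nat -> int) i j :
  dval (pure [seq G q | q <- iota 0 m]) i j =
  \sum_(p < m | ((p : nat) == i) && (G p == j))
     \prod_(k < m | k != p :> nat) `|((G p - G k)%:~R : rat)|^-1.
Proof.
rewrite /pure size_map size_iota dval_map.
rewrite -(big_mkord (fun p => (p == i) && (G p == j))
   (fun p => \prod_(k < m | k != p :> nat) `|((G p - G k)%:~R : rat)|^-1)) /index_iota subn0.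
rewrite big_seq_cond [RHS]big_seq_cond; apply: eq_big => [p|p /andP[pin _]].
  case: (boolP (p \in iota 0 m)) => pin //=.
  move: (pin); rewrite mem_iota add0n => pm.
  by rewrite (nth_map 0%N) ?size_iota // nth_iota // xpair_eqE.
move: (pin); rewrite mem_iota add0n => pm.
apply: eq_bigr => k _.
by rewrite !(nth_map 0%N) ?size_iota // !nth_iota.
Qed.

Lemma sumn_st r (u : seq nat) : all (fun x => x < r)%N u -> sumn (st r (zr r) u) = size u.
Proof.
move=> hu; rewrite /st sumnE big_map.
have -> : iota 0 r = index_iota 0 r by rewrite /index_iota subn0.
rewrite big_mkord -(sum_count hu); apply: eq_bigr => k _.
by rewrite nth_zr add0n.
Qed.

Lemma word_eq Ds w i j : (forall k, (k < size Ds)%N -> (0 < size (nth [::] Ds k))%N) ->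
  w \in permutations (rest (size Ds) (nD Ds) (zr (size Ds))) ->
  dval (pure (Sigma (fill_word w (AsD Ds (zr (size Ds))))
                    (Vf (size Ds) (fD Ds) (zr (size Ds))))) i j =
  \sum_(a <- stl Ds | (sumn a, Vd Ds a) == (i, j)) hw (size Ds) (fD Ds) (zr (size Ds)) w a.
Proof.
move=> pos; rewrite mem_permutations => pw.
have cw : forall k, count_mem k w = if (k < size Ds)%N then (nD Ds k - 0)%N else 0%N.
  by move=> k; rewrite (permP pw) count_rest nth_zr.
have aw : all (fun x => x < size Ds)%N w.
  apply/allP => x xw; have : x \in rest (size Ds) (nD Ds) (zr (size Ds)) by rewrite -(perm_mem pw).
  by rewrite mem_rest => /andP[].
rewrite fill_Sigma ?size_zr //; last by move=> k kr; rewrite nth_zr cw kr; lia.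
rewrite dval_pure_map /hw.
rewrite (exchange_big_dep xpredT) //= big_mkcond; apply: eq_bigr => p _.
set sp := st (size Ds) (zr (size Ds)) (take p w).
have spin : sp \in stl Ds.
  apply: stl_mem; first by rewrite size_st.
  move=> k kr; rewrite nth_st // nth_zr add0n.
  have hc := cw k; rewrite kr -(cat_take_drop p w) count_cat /nD in hc.
  have := pos k kr; lia.
rewrite [RHS]big_mkcond [RHS](bigD1_seq sp spin (stl_uniq Ds)) /= eqxx mul1r andbT.
rewrite [X in _ + X]big1 ?addr0; last first.
  by move=> a /negbTE an; case: ifP => // _; rewrite (eq_sym sp) an mul0r.
rewrite xpair_eqE sumn_st ?all_take_lt // size_takel; last by rewrite -ltnS.
by rewrite Vd_Vf // size_st.
Qed.

Lemma size_Delta (D : seq int) : size (Delta D) = (size D).-1.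
Proof. by case: D => [|d D] //=; rewrite /Delta size_pairmap. Qed.

Lemma AsD_zr Ds : AsD Ds (zr (size Ds)) = [seq Delta d | d <- Ds].
Proof.
rewrite /AsD (eq_map (g := fun k => Delta (nth [::] Ds k))); last first.
  by move=> k; rewrite nth_zr drop0.
by rewrite -[in RHS](mkseq_nth [::] Ds) /mkseq -map_comp.
Qed.

Lemma label_eq Ds :
  label_words [seq Delta d | d <- Ds] = permutations (rest (size Ds) (nD Ds) (zr (size Ds))).
Proof.
rewrite /label_words /rest size_map; congr (permutations (flatten _)).
apply/eq_in_map => k; rewrite mem_iota add0n => kr.
by rewrite (nth_map [::]) // size_Delta nth_zr subn0.
Qed.

Lemma dmul_unit E : dmul E dunit = E.
Proof.
rewrite /dmul; elim: E => [|[[x y] z] E IH] //=.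
by rewrite IH !addr0 mulr1.
Qed.

Lemma dval_flatten (L : seq diagram) i j : dval (dsum L) i j = \sum_(D <- L) dval D i j.
Proof. by rewrite /dval /dsum big_flatten. Qed.

Lemma sum_head Ds : \sum_(d <- Ds) head 0 d = Vf (size Ds) (fD Ds) (zr (size Ds)).
Proof.
rewrite (big_nth [::]) big_mkord /Vf; apply: eq_bigr => k _.
by rewrite nth_zr /fD nth0.
Qed.

Lemma general Ds : all degree_seq Ds ->
  diag_eq (dprod [seq pure d | d <- Ds])
       (dsum [seq pure (Sigma sigma (\sum_(d <- Ds) head 0 d))
             | sigma <- shuffles [seq Delta d | d <- Ds]]).
Proof.
move=> hall.
have hD : forall k, (k < size Ds)%N -> degree_seq (nth [::] Ds k).
  by move=> k kr; apply: (allP hall); exact: mem_nth.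
have pos : forall k, (k < size Ds)%N -> (0 < size (nth [::] Ds k))%N.
  by move=> k kr; case/andP: (hD k kr).
have inc : incr (size Ds) (nD Ds) (fD Ds).
  move=> k l l' kr ll' l'n; case/andP: (hD k kr) => sz0 so.
  have H := lt_sorted_ltn_nth 0 so.
  rewrite /fD H ?inE //.
    exact: leq_trans ll' (leq_trans l'n (leq_pred _)).
  by apply: leq_ltn_trans l'n _; rewrite /nD ltn_predL.
move=> i j.
rewrite dval_lhs dval_flatten /shuffles -map_comp big_map sum_head label_eq -AsD_zr.
transitivity (\sum_(w <- permutations (rest (size Ds) (nD Ds) (zr (size Ds))))
   \sum_(a <- stl Ds | (sumn a, Vd Ds a) == (i, j)) hw (size Ds) (fD Ds) (zr (size Ds)) w a);
  last by apply: eq_big_seq => w wP; rewrite /= word_eq.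
rewrite (exchange_big_dep xpredT) //=.
rewrite big_mkcond; apply: eq_big_seq => a ain.
case: ifP => hc; last by rewrite big_pred0.
rewrite -/(S (size Ds) (nD Ds) (fD Ds) (zr (size Ds)) a).
have sza := stl_size ain.
rewrite Pd_prod // S_main //; last first.
  by move=> k kr; have := stl_bound ain kr; rewrite /nD; lia.
apply: eq_bigr => k _; rewrite /nD prednK ?pos //.
Qed.

Theorem theorem5p2 :
  (forall c d : seq int, degree_seq c -> degree_seq d ->
     diag_eq (dmul (pure c) (pure d))
       (dsum [seq pure (Sigma sigma (head 0 c + head 0 d))
             | sigma <- shuffles [:: Delta c; Delta d]]))
  /\
  (forall Ds : seq (seq int), (0 < size Ds)%N -> all degree_seq Ds ->
     diag_eq (dprod [seq pure d | d <- Ds])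
       (dsum [seq pure (Sigma sigma (\sum_(d <- Ds) head 0 d))
             | sigma <- shuffles [seq Delta d | d <- Ds]])).
Proof.
split; last by move=> Ds _; exact: general.
move=> c d hc hd.
have e1 : dprod [seq pure d0 | d0 <- [:: c; d]] = dmul (pure c) (pure d).
  by rewrite /dprod /= dmul_unit.
have e2 : [seq Delta d0 | d0 <- [:: c; d]] = [:: Delta c; Delta d] by [].
have e3 : \sum_(d0 <- [:: c; d]) head 0 d0 = head 0 c + head 0 d.
  by rewrite big_cons big_seq1.
rewrite -e1 -e2 -e3; apply: general.
by rewrite /= hc hd.
Qed.
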